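(* Consider a matched pair study ($n_i=2$ for all $i$) and assume Fisher's null $H_0$ holds. Let $1\le k\le I$ and $\Gamma_0\in[1,\infty]$. If $\Gamma^\star_{(k)}\le\Gamma_0$, then $\mathbb P(T\ge c)\le\mathbb P(\overline T(\Gamma_0;k)\ge c)$ for all $c\in\mathbb R$, where $\overline T(\Gamma_0;k)=\overline T(\Gamma_0\mathbf 1_{\mathcal I_k}+\infty\cdot\mathbf 1_{\mathcal I_k^c})$ and $\mathcal I_k$ is a set of indices of $k$ pairs with the $k$ smallest values of $|q_{i1}-q_{i2}|$. Explicitly, $\overline T(\Gamma_0;k)$ is a sum of independent variables: for $i\in\mathcal I_k$ the $i$th equals $\max\{q_{i1},q_{i2}\}$ with probability $\Gamma_0/(1+\Gamma_0)$ and $\min\{q_{i1},q_{i2}\}$ otherwise; for $i\notin\mathcal I_k$ it equals $\max\{q_{i1},q_{i2}\}$ with probability 1.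
   Context: Setting: $I$ matched sets; set $i$ has $n_i\ge2$ units, $N=\sum_in_i$; potential outcomes fixed; $Z\in\mathcal Z=\{z\in\{0,1\}^N:\sum_jz_{ij}=1\ \forall i\}$ is the only randomness. True mechanism $\mathbb P(Z=z)=\prod_i\prod_j(p^\star_{ij})^{z_{ij}}$, $p^\star_{ij}\ge0$, $\sum_jp^\star_{ij}=1$; true hidden bias $\Gamma^\star_i=\max_jp^\star_{ij}/\min_kp^\star_{ik}\in[1,\infty]$ ($\infty$ if the minimum is 0); $\Gamma^\star_{(1)}\le\dots\le\Gamma^\star_{(I)}$ are the sorted values. Fisher's null $H_0$: $Y_{ij}(1)=Y_{ij}(0)$ for all $i,j$. $T=\sum_i\sum_jZ_{ij}q_{ij}$ with $q_{ij}$ fixed functions of $Y(0)$. $\mathbf 1_{\mathcal I}$ is the indicator vector of $\mathcal I\subset\{1,\dots,I\}$, $\infty\cdot\mathbf 1_{\mathcal I}$ the vector with entries $\infty$ on $\mathcal I$ and $0$ elsewhere, and $\mathcal I^c$ the complement. For $\Gamma\in[1,\infty]^I$, $\overline T(\Gamma)$ is a sum of independent variables, the $i$th equal to $\max\{q_{i1},q_{i2}\}$ with probability $\Gamma_i/(1+\Gamma_i)$ (probability 1 if $\Gamma_i=\infty$) and $\min\{q_{i1},q_{i2}\}$ otherwise. *)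

(* Defs.v *)
From HB Require Import structures.
From mathcomp Require Import all_boot all_order all_algebra.
From mathcomp Require Import reals constructive_ereal.
Set Implicit Arguments. Unset Strict Implicit. Unset Printing Implicit Defensive.
Import Order.TTheory GRing.Theory Num.Theory.
Local Open Scope ring_scope.

(* Matched pairs: I pairs indexed by 'I_I, units within a pair by 'I_2.
   A treatment assignment z picks the treated unit in each pair. *)

Section Defs.
Variable R : realType.
Variable I : nat.

Definition assign_prob (p : 'I_I -> 'I_2 -> R) (z : {ffun 'I_I -> 'I_2}) : R :=
  \prod_(i < I) p i (z i).

(* T = sum_i sum_j Z_ij q_ij = sum_i q i (z i) *)
Definition Tstat (q : 'I_I -> 'I_2 -> R) (z : {ffun 'I_I -> 'I_2}) : R :=
  \sum_(i < I) q i (z i).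

Definition prob_T_ge (p q : 'I_I -> 'I_2 -> R) (c : R) : R :=
  \sum_(z : {ffun 'I_I -> 'I_2}) assign_prob p z * (if c <= Tstat q z then 1 else 0).

Definition gamma_star (pi : 'I_2 -> R) : \bar R :=
  let mn := Num.min (pi ord0) (pi ord_max) in
  let mx := Num.max (pi ord0) (pi ord_max) in
  if mn == 0 then +oo%E else (mx / mn)%:E.

(* k-th smallest (1-based) of the Gamma*_i, i.e. Gamma*_(k) *)
Definition gamma_order_stat (p : 'I_I -> 'I_2 -> R) (k : nat) : \bar R :=
  nth +oo%E (sort (fun x y : \bar R => (x <= y)%E)
                  [seq gamma_star (p i) | i <- enum 'I_I]) k.-1.

(* probability that the i-th summand of Tbar(Gamma) is max{q_i1,q_i2}:
   Gamma/(1+Gamma), or 1 if Gamma = +oo *)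
Definition upper_prob (g : \bar R) : R :=
  match g with
  | (x%:E)%E => x / (1 + x)
  | (+oo)%E => 1
  | (-oo)%E => 0
  end.

Definition prob_Tbar_ge (G : 'I_I -> \bar R) (q : 'I_I -> 'I_2 -> R) (c : R) : R :=
  \sum_(b : {ffun 'I_I -> bool})
     (\prod_(i < I) (if b i then upper_prob (G i) else 1 - upper_prob (G i))) *
     (if c <= \sum_(i < I) (if b i then Num.max (q i ord0) (q i ord_max)
                                   else Num.min (q i ord0) (q i ord_max))
      then 1 else 0).

Definition gamma_vec (G0 : \bar R) (Ik : {set 'I_I}) : 'I_I -> \bar R :=
  fun i => if i \in Ik then G0 else +oo%E.

End Defs.

(* Main.v *)
Require Import Defs.
From HB Require Import structures.
From mathcomp Require Import all_boot all_order all_algebra.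
From mathcomp Require Import reals constructive_ereal.
From mathcomp Require Import all_fingroup.
From mathcomp Require Import lra zify.
Import Order.TTheory GRing.Theory Num.Theory.
Local Open Scope ring_scope.
Set Implicit Arguments. Unset Strict Implicit. Unset Printing Implicit Defensive.

Section Gen.
Variable R : realType.
Variable I : nat.
Local Notation Om := {ffun 'I_I -> bool}.

Definition W (b : 'I_I -> R) (w : Om) : R :=
  \prod_(i < I) (if w i then b i else 1 - b i).
Definition hh (lo hi : 'I_I -> R) (c : R) (w : Om) : R :=
  if c <= \sum_(i < I) (if w i then hi i else lo i) then 1 else 0.
Definition Q (b : 'I_I -> R) (h : Om -> R) : R := \sum_(w : Om) W b w * h w.
Definition upd (b : 'I_I -> R) (j : 'I_I) (x : R) : 'I_I -> R :=
  fun i => if i == j then x else b i.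
Definition flip (j : 'I_I) (w : Om) : Om := [ffun i => if i == j then ~~ w i else w i].

Lemma flipK j : involutive (flip j).
Proof. by move=> w; apply/ffunP => i; rewrite !ffunE; case: (i == j) => //; rewrite negbK. Qed.

Lemma W_ge0 b w : (forall i, 0 <= b i <= 1) -> 0 <= W b w.
Proof.
move=> hb; apply: prodr_ge0 => i _; case: (w i); have /andP[h0 h1] := hb i => //.
by rewrite subr_ge0.
Qed.

Lemma W_eq b b' w : b =1 b' -> W b w = W b' w.
Proof. by move=> e; apply: eq_bigr => i _; rewrite e. Qed.

Lemma Q_eq b b' h : b =1 b' -> Q b h = Q b' h.
Proof. by move=> e; apply: eq_bigr => w _; rewrite (W_eq w e). Qed.

Definition Rj (b : 'I_I -> R) (j : 'I_I) (w : Om) : R := \prod_(i < I | i != j) (if w i then b i else 1 - b i).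

Lemma W_split b j w : W b w = (if w j then b j else 1 - b j) * Rj b j w.
Proof. by rewrite /W (bigD1 j). Qed.

Lemma Rj_flip b j w : Rj b j (flip j w) = Rj b j w.
Proof. by apply: eq_bigr => i /negbTE Hi; rewrite ffunE Hi. Qed.

Lemma Rj_upd b j x w : Rj (upd b j x) j w = Rj b j w.
Proof. by apply: eq_bigr => i /negbTE Hi; rewrite /upd Hi. Qed.

Lemma Rj_ge0 b j w : (forall i, 0 <= b i <= 1) -> 0 <= Rj b j w.
Proof.
move=> hb; apply: prodr_ge0 => i _; case: (w i); have /andP[h0 h1] := hb i => //.
by rewrite subr_ge0.
Qed.

Definition hmono (h : Om -> R) := forall w1 w2 : Om, (forall i, w1 i -> w2 i) -> h w1 <= h w2.

Lemma Q_decomp b j h : Q b h =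
  b j * (\sum_(w : Om | w j) Rj b j w * h w) + (1 - b j) * (\sum_(w : Om | ~~ w j) Rj b j w * h w).
Proof.
rewrite /Q (bigID (fun w : Om => w j)) /= !mulr_sumr; congr (_ + _);
  apply: eq_bigr => w hw; rewrite (W_split b j).
  by rewrite hw mulrA.
by rewrite (negbTE hw) mulrA.
Qed.

Lemma L1 b j x h : (forall i, 0 <= b i <= 1) -> b j <= x -> x <= 1 -> hmono h ->
  Q b h <= Q (upd b j x) h.
Proof.
move=> hb hx hx1 hm.
have hbj := hb j.
set A := \sum_(w : Om | w j) Rj b j w * h w.
set B := \sum_(w : Om | ~~ w j) Rj b j w * h w.
have BA : B <= A.
  rewrite /B (reindex_inj (inv_inj (flipK j))) /=.
  rewrite [X in X <= _](eq_bigl (fun w : Om => w j)); last first.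
    by move=> w; rewrite ffunE eqxx negbK.
  apply: ler_sum => w wj; rewrite Rj_flip; apply: ler_wpM2l; first exact: Rj_ge0.
  apply: hm => i; rewrite ffunE; case: eqP => [->|] //.
rewrite (Q_decomp b j) (Q_decomp (upd b j x) j) /upd eqxx.
have -> : \sum_(w : Om | w j) Rj (fun i => if i == j then x else b i) j w * h w = A.
  by apply: eq_bigr => w _; rewrite (Rj_upd b j x).
have -> : \sum_(w : Om | ~~ w j) Rj (fun i => if i == j then x else b i) j w * h w = B.
  by apply: eq_bigr => w _; rewrite (Rj_upd b j x).
have H : 0 <= (x - b j) * (A - B) by apply: mulr_ge0; rewrite subr_ge0.
rewrite -/A -/B. nra.
Qed.


Lemma Q_mono h : hmono h -> forall (m : nat) (b b' : 'I_I -> R), (#|[set i | b i != b' i]| <= m)%N ->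
  (forall i, 0 <= b i /\ b i <= b' i /\ b' i <= 1) -> Q b h <= Q b' h.
Proof.
move=> hm; elim=> [|m IH] b b' hc hb.
  have e : b =1 b'.
    move=> i; apply/eqP; apply: contraTT hc => Hi; rewrite -ltnNge.
    by apply/card_gt0P; exists i; rewrite inE.
  by rewrite (Q_eq h e).
case: (set_0Vmem [set i | b i != b' i]) => [E0|[j Hj]].
  have e : b =1 b'.
    move=> i; apply/eqP; apply: contraT => Hi.
    have : i \in [set i | b i != b' i] by rewrite inE.
    by rewrite E0 inE.
  by rewrite (Q_eq h e).
have hb01 : forall i, 0 <= b i <= 1.
  by move=> i; have [h0 [h1 h2]] := hb i; rewrite h0 /=; apply: le_trans h2.
apply: (le_trans (L1 (j := j) (x := b' j) hb01 _ _ hm)).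
- by have [_ [? _]] := hb j.
- by have [_ [_ ?]] := hb j.
apply: IH; last first.
  move=> i; rewrite /upd; case: eqP => [->|_]; last exact: hb.
  have [h0 [h1 h2]] := hb j; split; [apply: le_trans h1|split] => //.
have -> : [set i | upd b j (b' j) i != b' i] = [set i | b i != b' i] :\ j.
  apply/setP => i; rewrite !inE /upd; case: (i =P j) => [->|]; first by rewrite eqxx.
  by move=> _.
move: hc; rewrite (cardsD1 j) Hj /=; lia.
Qed.

Lemma hh_mono lo hi c : (forall i, lo i <= hi i) -> hmono (hh lo hi c).
Proof.
move=> hl w1 w2 hw; rewrite /hh.
have hs : \sum_(i < I) (if w1 i then hi i else lo i) <= \sum_(i < I) (if w2 i then hi i else lo i).
  apply: ler_sum => i _; case E1: (w1 i); first by rewrite (hw i E1).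
  by case: (w2 i).
case: ifP => H1; last by case: ifP.
by rewrite (le_trans H1 hs).
Qed.

Definition perm_om (s : 'I_I -> 'I_I) (w : Om) : Om := [ffun k => w (s k)].

Lemma Q_tperm b lo hi c i j :
  Q b (hh lo hi c) = Q (b \o tperm i j) (hh (lo \o tperm i j) (hi \o tperm i j) c).
Proof.
have inv : involutive (perm_om (tperm i j)).
  by move=> w; apply/ffunP => k; rewrite !ffunE tpermK.
rewrite /Q (reindex_inj (inv_inj inv)) /=; apply: eq_bigr => w _.
congr (_ * _).
  rewrite /W (reindex_inj (@perm_inj _ (tperm i j))) /=.
  by apply: eq_bigr => k _; rewrite ffunE /= tpermK.
rewrite /hh (reindex_inj (@perm_inj _ (tperm i j))) /=.
congr (if c <= _ then _ else _).
by apply: eq_bigr => k _; rewrite ffunE /= tpermK.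
Qed.

Lemma sum3 (F : 'I_I -> R) i j : i != j ->
  \sum_(k < I) F k = F i + F j + \sum_(k < I | (k != i) && (k != j)) F k.
Proof.
move=> hij; rewrite (bigD1 i) //= (bigD1 j) /=; last by rewrite eq_sym.
by rewrite addrA.
Qed.

Lemma Q_swap b lo hi c i j beta : i != j -> hi i - lo i <= hi j - lo j ->
  (forall k, 0 <= b k <= 1) -> 0 <= beta <= 1 ->
  Q (upd (upd b i 1) j beta) (hh lo hi c) <= Q (upd (upd b i beta) j 1) (hh lo hi c).
Proof.
move=> hij hd hb hbeta.
rewrite (Q_tperm _ _ _ _ i j).
have e : (upd (upd b i 1) j beta) \o tperm i j =1 upd (upd b i beta) j 1.
  move=> k /=; rewrite /upd; case: tpermP => [->|->|/eqP hki /eqP hkj].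
  - by rewrite !eqxx (negbTE hij).
  - by rewrite !eqxx (negbTE hij).
  - by rewrite (negbTE hki) (negbTE hkj).
rewrite (Q_eq _ e).
have hb2 : forall k, 0 <= upd (upd b i beta) j 1 k <= 1.
  by move=> k; rewrite /upd; case: eqP => _; [rewrite ler01 lexx|case: eqP => _ //].
apply: ler_sum => w _.
case wj: (w j); last first.
  by rewrite (W_split _ j) wj /upd eqxx subrr !mul0r.
apply: ler_wpM2l; first exact: W_ge0.
rewrite /hh.
have hs : \sum_(k < I) (if w k then (hi \o tperm i j) k else (lo \o tperm i j) k)
   <= \sum_(k < I) (if w k then hi k else lo k).
  rewrite (sum3 _ hij) [X in _ <= X](sum3 _ hij) /= wj tpermL tpermR.
  have -> : \sum_(k < I | (k != i) && (k != j)) (if w k then hi (tperm i j k) else lo (tperm i j k))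
     = \sum_(k < I | (k != i) && (k != j)) (if w k then hi k else lo k).
    by apply: eq_bigr => k /andP[hki hkj]; rewrite tpermD // eq_sym.
  case: (w i); lra.
case: ifP => H1; last by case: ifP.
by rewrite (le_trans H1 hs).
Qed.


Lemma main_ind (lo hi : 'I_I -> R) (c : R) (Ik : {set 'I_I}) (beta : R) (g : 'I_I -> R) :
  0 <= beta <= 1 ->
  (forall i j, i \in Ik -> j \notin Ik -> hi i - lo i <= hi j - lo j) ->
  (forall i, lo i <= hi i) ->
  (forall i, g i = if i \in Ik then beta else 1) ->
  forall (n : nat) (b : 'I_I -> R), (forall i, 0 <= b i <= 1) ->
  (#|Ik :\: [set i | (b i <= beta)%R]| <= n)%N ->
  (#|Ik| <= #|[set i | (b i <= beta)%R]|)%N ->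
  Q b (hh lo hi c) <= Q g (hh lo hi c).
Proof.
move=> hbeta hd hlh hg; have hm := hh_mono c hlh.
have hb1 : 0 <= beta /\ beta <= 1 by apply/andP.
elim=> [|n IH] b hb hc hS;
  (case: (set_0Vmem (Ik :\: [set i | (b i <= beta)%R])) => [E0|[i Hi]]).
- apply: (Q_mono hm (leqnn _)) => i; have /andP[h0 h1] := hb i.
  split=> //; rewrite hg; case: ifP => hiI0; split => //.
  all: try by rewrite ?lexx ?ler01.
  + have : i \notin Ik :\: [set i | (b i <= beta)%R] by rewrite E0 inE.
    by rewrite !inE hiI0 andbT negbK.
  + by case: hb1.
- have : (0 < #|Ik :\: [set i | (b i <= beta)%R]|)%N by apply/card_gt0P; exists i.
  lia.
- apply: (Q_mono hm (leqnn _)) => i; have /andP[h0 h1] := hb i.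
  split=> //; rewrite hg; case: ifP => hiI0; split => //.
  all: try by rewrite ?lexx ?ler01.
  + have : i \notin Ik :\: [set i | (b i <= beta)%R] by rewrite E0 inE.
    by rewrite !inE hiI0 andbT negbK.
  + by case: hb1.
move: Hi; rewrite !inE => /andP[hiS hiI].
case: (set_0Vmem ([set i | (b i <= beta)%R] :\: Ik)) => [E1|[j Hj]].
  have sub : [set i | (b i <= beta)%R] \subset Ik by rewrite -setD_eq0 E1.
  have : [set i | (b i <= beta)%R] \proper Ik.
    by apply/properP; split=> //; exists i; rewrite // inE.
  by move/proper_card; rewrite ltnNge hS.
move: Hj; rewrite !inE => /andP[hjI hjS].
have hij : i != j by apply: contraNneq hjI => <-.
have hbi := hb i; have hbj := hb j.
apply: (@le_trans _ _ (Q (upd (upd b i 1) j beta) (hh lo hi c))).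
  apply: (Q_mono hm (leqnn _)) => k; rewrite /upd.
  case: (k =P j) => [->|_].
    by case/andP: hbj => ? ?; case: hb1.
  case: (k =P i) => [->|_]; first by case/andP: hbi.
  by case/andP: (hb k).
apply: (@le_trans _ _ (Q (upd (upd b i beta) j 1) (hh lo hi c))).
  by apply: Q_swap => //; apply: hd.
have hb2 : forall k, 0 <= upd (upd b i beta) j 1 k <= 1.
  by move=> k; rewrite /upd; case: eqP => _; [rewrite ler01 lexx|case: eqP => _ //].
apply: (IH _ hb2).
  have sub : Ik :\: [set k | (upd (upd b i beta) j 1 k <= beta)%R] \subset
             (Ik :\: [set k | (b k <= beta)%R]) :\ i.
    apply/subsetP => k; rewrite !inE /upd.
    case: (k =P j) => [->|_]; first by rewrite (negbTE hjI) andbF.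
    case: (k =P i) => [->|_] /=; first by rewrite lexx.
    by move=> /andP[-> ->].
  have := subset_leq_card sub.
  move: hc; rewrite [#|Ik :\: _|](cardsD1 i) !inE hiI hiS /=; lia.
have sub : i |: ([set k | (b k <= beta)%R] :\ j) \subset [set k | (upd (upd b i beta) j 1 k <= beta)%R].
  apply/subsetP => k; rewrite !inE /upd.
  case: (k =P j) => [->|_].
    by rewrite eq_sym (negbTE hij).
  by case: (k =P i) => [->|_] /=; rewrite ?lexx.
have := subset_leq_card sub.
rewrite cardsU1 !inE (negbTE hiS) andbF /=.
move: hS; rewrite [#|[set k | (b k <= beta)%R]|](cardsD1 j) !inE hjS /=.
move=> h1 h2; exact: leq_trans h1 h2.
Qed.

End Gen.

Lemma cnt (T:finType) (P: pred T): count P (enum T) = #|P|.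
Proof. rewrite cardE /enum_mem size_filter /= count_filter; apply: eq_count => x /=. by rewrite andbT. Qed.

Lemma sum2 (R : realType) (f : 'I_2 -> R) : \sum_(j < 2) f j = f ord0 + f ord_max.
Proof. rewrite big_ord_recl big_ord1. congr (f _ + f _); exact: val_inj. Qed.

Lemma I2 (x : 'I_2) : x = ord0 \/ x = ord_max.
Proof. case: x => [[|[|n]] H]; [left|right|] => //; exact: val_inj. Qed.

Definition other (j : 'I_2) : 'I_2 := if j == ord0 then ord_max else ord0.

Lemma other_neq j : (other j == j) = false.
Proof. by case: (I2 j) => ->. Qed.

Lemma other_other j : other (other j) = j.
Proof. by case: (I2 j) => ->. Qed.

Lemma other_eq j k : k != j -> k = other j.
Proof. by case: (I2 j) => ->; case: (I2 k) => ->. Qed.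

Section Top.
Variable R : realType.
Variable I : nat.
Variables p q : 'I_I -> 'I_2 -> R.
Hypothesis p_ge0 : forall i j, 0 <= p i j.
Hypothesis p_sum1 : forall i, \sum_(j < 2) p i j = 1.

Definition jstar i : 'I_2 := if q i ord0 <= q i ord_max then ord_max else ord0.
Definition aa i := p i (jstar i).
Definition lo i := Num.min (q i ord0) (q i ord_max).
Definition hi i := Num.max (q i ord0) (q i ord_max).

Lemma p_other i j : p i (other j) = 1 - p i j.
Proof.
have := p_sum1 i; rewrite sum2 => hs.
case: (I2 j) => ->; rewrite /other /=; lra.
Qed.

Definition psi (w : {ffun 'I_I -> bool}) : {ffun 'I_I -> 'I_2} :=
  [ffun i => if w i then jstar i else other (jstar i)].
Definition phi (z : {ffun 'I_I -> 'I_2}) : {ffun 'I_I -> bool} :=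
  [ffun i => z i == jstar i].

Lemma stepA c : prob_T_ge p q c = Q aa (hh lo hi c).
Proof.
rewrite /prob_T_ge /Q (reindex psi); last first.
  exists phi => x _.
    apply/ffunP => i; rewrite !ffunE; case: (x i); first by rewrite eqxx.
    by rewrite other_neq.
  apply/ffunP => i; rewrite !ffunE; case: eqP => [-> //|/eqP H].
  by rewrite -(other_eq H).
apply: eq_bigr => w _; congr (_ * _).
  rewrite /assign_prob /W; apply: eq_bigr => i _; rewrite ffunE /aa.
  by case: (w i) => //; rewrite p_other.
rewrite /Tstat /hh; congr (if c <= _ then _ else _); apply: eq_bigr => i _.
rewrite ffunE /jstar /lo /hi maxEle minEle.
by case H: (q i ord0 <= q i ord_max); case: (w i).
Qed.

Lemma aa_bounds i : 0 <= aa i <= 1.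
Proof.
rewrite /aa p_ge0 /=; have := p_ge0 i (other (jstar i)); rewrite p_other; lra.
Qed.

Lemma lohi i : lo i <= hi i.
Proof. by rewrite /lo /hi maxEle minEle; case: ifP => // /negbT; rewrite -ltNge => /ltW. Qed.

Lemma dist i : hi i - lo i = `|q i ord0 - q i ord_max|.
Proof.
rewrite /lo /hi maxEle minEle; case: ifP => H.
  by rewrite distrC ger0_norm ?subr_ge0.
by rewrite ger0_norm // subr_ge0 ltW // ltNge H.
Qed.

Lemma stepC1 (G0 : \bar R) (hG : (1%:E <= G0)%E) i :
  (gamma_star (p i) <= G0)%E -> aa i <= upper_prob G0.
Proof.
have hs := p_sum1 i; rewrite sum2 in hs.
have h0 := p_ge0 i ord0; have h1 := p_ge0 i ord_max.
set u := p i ord0 in hs h0 h1 *; set v := p i ord_max in hs h0 h1 *.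
have ha : aa i <= Num.max u v.
  by rewrite /aa /jstar; case: ifP => _; rewrite le_max lexx ?orbT.
have hmm : Num.max u v + Num.min u v = 1.
  rewrite maxEle minEle; case: ifP => _; lra.
have hmn : 0 <= Num.min u v by rewrite le_min h0 h1.
case: G0 hG => [x| |] //= hG; last by move=> _; have := aa_bounds i; case/andP.
rewrite lee_fin in hG; rewrite /gamma_star.
case: eqP => [_|/eqP hz] //; rewrite lee_fin => H.
have hpos : 0 < Num.min u v by rewrite lt_def hz hmn.
rewrite ler_pdivrMr // in H.
rewrite ler_pdivlMr; last lra.
have : aa i * (1 + x) <= Num.max u v * (1 + x) by apply: ler_wpM2r; lra.
nra.
Qed.

End Top.

Theorem theorem2 (R : realType) (I : nat)
  (p : 'I_I -> 'I_2 -> R) (q : 'I_I -> 'I_2 -> R)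
  (p_ge0 : forall i j, 0 <= p i j)
  (p_sum1 : forall i, \sum_(j < 2) p i j = 1)
  (k : nat) (k_ge1 : (1 <= k)%N) (k_leI : (k <= I)%N)
  (G0 : \bar R) (G0_ge1 : (1%:E <= G0)%E)
  (Ik : {set 'I_I}) (card_Ik : #|Ik| = k)
  (Ik_smallest : forall i j, i \in Ik -> j \notin Ik ->
      `|q i ord0 - q i ord_max| <= `|q j ord0 - q j ord_max|)
  (hbias : (gamma_order_stat p k <= G0)%E) :
  forall c : R, prob_T_ge p q c <= prob_Tbar_ge (gamma_vec G0 Ik) q c.
Proof.
move=> c.
have hbeta : 0 <= upper_prob G0 <= 1.
  case: G0 G0_ge1 {hbias} => [x| |] //= hx; last by rewrite ler01 lexx.
  rewrite lee_fin in hx; apply/andP; split; first by apply: divr_ge0; lra.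
  rewrite ler_pdivrMr; lra.
rewrite (stepA q p_sum1).
have -> : prob_Tbar_ge (gamma_vec G0 Ik) q c =
          Q (fun i => upper_prob (gamma_vec G0 Ik i)) (hh (lo q) (hi q) c) by [].
have C2 : (k <= #|[set i | (gamma_star (p i) <= G0)%E]|)%N.
  move: hbias; rewrite /gamma_order_stat.
  set s := [seq gamma_star (p i) | i <- enum 'I_I].
  set ss := sort _ s => hb.
  have hsz : size ss = I by rewrite size_sort size_map size_enum_ord.
  have hsorted : sorted (fun x y : \bar R => (x <= y)%E) ss.
    by apply: sort_sorted => x y; apply: le_total.
  have hall : all (fun x => (x <= G0)%E) (take k ss).
    apply/(all_nthP +oo%E) => t; rewrite size_takel ?hsz // => ht.
    rewrite nth_take //; apply: le_trans hb.
    apply: (sorted_leq_nth (fun y x z => @le_trans _ _ y x z) (fun x => lexx x)) => //.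
    all: rewrite ?unfold_in /= ?hsz.
    - exact: leq_trans ht k_leI.
    - by apply: leq_trans k_leI; rewrite ltn_predL.
    - by rewrite -ltnS prednK.
  have : (k <= count (fun x => (x <= G0)%E) ss)%N.
    rewrite -(cat_take_drop k ss) count_cat.
    move: hall; rewrite all_count => /eqP ->; rewrite size_takel ?hsz //.
    exact: leq_addr.
  rewrite count_sort count_map.
  suff -> : count (preim (fun i => gamma_star (p i)) (fun x => (x <= G0)%E)) (enum 'I_I)
     = #|[set i | (gamma_star (p i) <= G0)%E]| by [].
  rewrite (cnt (fun i => (gamma_star (p i) <= G0)%E)).
  by apply: eq_card => i; rewrite !inE.
have C3 : (#|Ik| <= #|[set i | (aa p q i <= upper_prob G0)%R]|)%N.
  rewrite card_Ik; apply: (leq_trans C2); apply: subset_leq_card.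
  apply/subsetP => i; rewrite !inE; exact: stepC1.
apply: (@main_ind R I (lo q) (hi q) c Ik (upper_prob G0) _ hbeta _ _ _ _ (aa p q) _ (leqnn _) C3).
- move=> i j hi hj; rewrite !dist; exact: Ik_smallest.
- exact: lohi.
- by move=> i; rewrite /gamma_vec; case: ifP.
- exact: aa_bounds.
Qed.
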